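(* Let $\mathcal E$ be a relation on closed values and $v_0,v_1$ closed values with $v_0\approx^p_{\mathcal E}v_1$. Then for every context $C$ such that $C[v_0]$ and $C[v_1]$ are closed, $C[v_0]\approx^p_{\mathcal E}C[v_1]$.
   Context: Terms of $\lambda_S$: $t ::= x \mid \lambda x.t \mid t\,t \mid \mathcal{S}k.t \mid \langle t\rangle$ (shift binds $k$; $\langle\cdot\rangle$ reset), up to $\alpha$-conversion. Values $v::=\lambda x.t$. Pure contexts $E ::= \Box \mid v\,E \mid E\,t$; evaluation contexts $F ::= \Box \mid v\,F \mid F\,t \mid \langle F\rangle$; contexts $C ::= \Box \mid \lambda x.C \mid t\,C \mid C\,t \mid \mathcal{S}k.C \mid \langle C\rangle$. Reduction: $F[(\lambda x.t)v]\to F[t\{v/x\}]$; $F[\langle E[\mathcal Sk.t]\rangle]\to F[\langle t\{\lambda x.\langle E[x]\rangle/k\}\rangle]$ ($x\notin\mathrm{fv}(E)$); $F[\langle v\rangle]\to F[v]$; $\to^*$ reflexive-transitive closure. Program: term $\langle t\rangle$ (ranged over by $p$). Closures: for $R$ a relation on closed terms, $\widetilde R$ is the smallest relation containing $R$, all $(x,x)$, closed under all term constructors, restricted to closed terms; $\widehat R$ is the smallest relation on closed evaluation contexts with $\Box\widehat R\Box$, $v_0F_0\widehat Rv_1F_1$ if $F_0\widehat RF_1,v_0\widetilde Rv_1$; $F_0t_0\widehat RF_1t_1$ if $F_0\widehat RF_1,t_0\widetilde Rt_1$; $\langle F_0\rangle\widehat R\langle F_1\rangle$ if $F_0\widehat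 RF_1$. Environmental bisimilarity for programs: an environment $\mathcal E$ is a relation on closed values; an environmental relation $\mathcal X$ is a set of environments and triples $(\mathcal E,t_0,t_1)$, $t_0,t_1$ closed, written $t_0\mathcal X_{\mathcal E}t_1$. $\mathcal X$ is an environmental bisimulation for programs if (1) if $t_0\mathcal X_{\mathcal E}t_1$ and $t_0,t_1$ are not both programs, then for all pure $E_0\widehat{\mathcal E}E_1$, $\langle E_0[t_0]\rangle\mathcal X_{\mathcal E}\langle E_1[t_1]\rangle$; (2) if $p_0\mathcal X_{\mathcal E}p_1$: (a) $p_0\to p_0'$ (program) implies $p_1\to^*p_1'$ (program) with $p_0'\mathcal X_{\mathcal E}p_1'$; (b) $p_0\to v_0$ implies $p_1\to^*v_1$ and $\{(v_0,v_1)\}\cup\mathcal E\in\mathcal X$; (c) symmetric conditions; (3) for $\mathcal E\in\mathcal X$, $(\lambda x.t_0)\mathcal E(\lambda x.t_1)$ and $v_0\widetilde{\mathcal E}v_1$ imply $t_0\{v_0/x\}\mathcal X_{\mathcal E}t_1\{v_1/x\}$. $\approx^p$ is the largest such relation; $t_0\approx^p_{\mathcal E}t_1$ means $(\mathcal E,t_0,t_1)\in\approx^p$. *)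

(* Defs.v *)
(* lambda_S (shift/reset) with de Bruijn indices (alpha-conversion built in). *)
From Stdlib Require Import Arith Relations.

Inductive term : Type :=
| Var   : nat -> term
| Lam   : term -> term
| App   : term -> term -> term
| Shift : term -> term          (* S k. t, k = index 0 in body *)
| Reset : term -> term.

Definition is_value (t : term) : Prop :=
  match t with Lam _ => True | _ => False end.

Fixpoint closed_at (n : nat) (t : term) : Prop :=
  match t with
  | Var m => m < n
  | Lam b => closed_at (S n) b
  | App a b => closed_at n a /\ closed_at n b
  | Shift b => closed_at (S n) b
  | Reset b => closed_at n b
  end.

Definition closed (t : term) : Prop := closed_at 0 t.

Fixpoint lift (c : nat) (t : term) : term :=
  match t with
  | Var n => if n <? c then Var n else Var (S n)
  | Lam b => Lam (lift (S c) b)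
  | App a b => App (lift c a) (lift c b)
  | Shift b => Shift (lift (S c) b)
  | Reset b => Reset (lift c b)
  end.

Fixpoint subst (j : nat) (s : term) (t : term) : term :=
  match t with
  | Var n => if n =? j then s else if j <? n then Var (pred n) else Var n
  | Lam b => Lam (subst (S j) (lift 0 s) b)
  | App a b => App (subst j s a) (subst j s b)
  | Shift b => Shift (subst (S j) (lift 0 s) b)
  | Reset b => Reset (subst j s b)
  end.

Definition subst0 (v t : term) : term := subst 0 v t.

(* Evaluation-context syntax F ::= [] | v F | F t | <F>; pure contexts have no reset. *)
Inductive fctx : Type :=
| FHole : fctx
| FAppR : term -> fctx -> fctx
| FAppL : fctx -> term -> fctx
| FReset : fctx -> fctx.

Fixpoint plugF (F : fctx) (t : term) : term :=
  match F with
  | FHole => t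
  | FAppR v F' => App v (plugF F' t)
  | FAppL F' u => App (plugF F' t) u
  | FReset F' => Reset (plugF F' t)
  end.

Fixpoint liftF (c : nat) (F : fctx) : fctx :=
  match F with
  | FHole => FHole
  | FAppR v F' => FAppR (lift c v) (liftF c F')
  | FAppL F' u => FAppL (liftF c F') (lift c u)
  | FReset F' => FReset (liftF c F')
  end.

Fixpoint evalctx (F : fctx) : Prop :=
  match F with
  | FHole => True
  | FAppR v F' => is_value v /\ evalctx F'
  | FAppL F' _ => evalctx F'
  | FReset F' => evalctx F'
  end.

Fixpoint purectx (F : fctx) : Prop :=
  match F with
  | FHole => True
  | FAppR v F' => is_value v /\ purectx F'
  | FAppL F' _ => purectx F'
  | FReset _ => False
  end.

Inductive step : term -> term -> Prop :=
| step_beta F t v : evalctx F -> is_value v ->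
    step (plugF F (App (Lam t) v)) (plugF F (subst0 v t))
| step_shift F E t : evalctx F -> purectx E ->
    step (plugF F (Reset (plugF E (Shift t))))
         (plugF F (Reset (subst0 (Lam (Reset (plugF (liftF 0 E) (Var 0)))) t)))
| step_reset F v : evalctx F -> is_value v ->
    step (plugF F (Reset v)) (plugF F v).

Definition steps : term -> term -> Prop := clos_refl_trans term step.

Definition is_program (t : term) : Prop :=
  match t with Reset _ => True | _ => False end.

(* General contexts C (may capture variables of the plugged term). *)
Inductive ctx : Type :=
| CHole : ctx
| CLam : ctx -> ctx
| CAppL : ctx -> term -> ctx
| CAppR : term -> ctx -> ctx
| CShift : ctx -> ctx
| CReset : ctx -> ctx.

Fixpoint plugC (C : ctx) (t : term) : term :=
  match C with
  | CHole => t
  | CLam C' => Lam (plugC C' t)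
  | CAppL C' u => App (plugC C' t) u
  | CAppR u C' => App u (plugC C' t)
  | CShift C' => Shift (plugC C' t)
  | CReset C' => Reset (plugC C' t)
  end.

Definition rel := term -> term -> Prop.

Inductive tilde_open (R : rel) : rel :=
| to_base t0 t1 : R t0 t1 -> tilde_open R t0 t1
| to_var n : tilde_open R (Var n) (Var n)
| to_lam a0 a1 : tilde_open R a0 a1 -> tilde_open R (Lam a0) (Lam a1)
| to_app a0 a1 b0 b1 : tilde_open R a0 a1 -> tilde_open R b0 b1 ->
    tilde_open R (App a0 b0) (App a1 b1)
| to_shift a0 a1 : tilde_open R a0 a1 -> tilde_open R (Shift a0) (Shift a1)
| to_reset a0 a1 : tilde_open R a0 a1 -> tilde_open R (Reset a0) (Reset a1).

Definition tilde (R : rel) : rel :=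
  fun t0 t1 => tilde_open R t0 t1 /\ closed t0 /\ closed t1.

Inductive hat (R : rel) : fctx -> fctx -> Prop :=
| hat_hole : hat R FHole FHole
| hat_appR v0 v1 F0 F1 : is_value v0 -> is_value v1 -> hat R F0 F1 ->
    tilde R v0 v1 -> hat R (FAppR v0 F0) (FAppR v1 F1)
| hat_appL F0 F1 t0 t1 : hat R F0 F1 -> tilde R t0 t1 ->
    hat R (FAppL F0 t0) (FAppL F1 t1)
| hat_reset F0 F1 : hat R F0 F1 -> hat R (FReset F0) (FReset F1).

Definition env_ok (E : rel) : Prop :=
  forall a b, E a b -> is_value a /\ closed a /\ is_value b /\ closed b.

(* an environmental relation: a set of environments and of triples *)
Record envrel : Type := {
  X_env : rel -> Prop;
  X_tri : rel -> term -> term -> Prop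
}.

Definition add_pair (v0 v1 : term) (E : rel) : rel :=
  fun a b => (a = v0 /\ b = v1) \/ E a b.

Definition env_bisim_p (X : envrel) : Prop :=
  (forall E, X_env X E -> env_ok E) /\
  (forall E t0 t1, X_tri X E t0 t1 -> env_ok E /\ closed t0 /\ closed t1) /\
  (* (1) *)
  (forall E t0 t1, X_tri X E t0 t1 -> ~ (is_program t0 /\ is_program t1) ->
     forall E0 E1, purectx E0 -> purectx E1 -> hat E E0 E1 ->
       X_tri X E (Reset (plugF E0 t0)) (Reset (plugF E1 t1))) /\
  (* (2a), (2b) *)
  (forall E p0 p1, is_program p0 -> is_program p1 -> X_tri X E p0 p1 ->
     (forall p0', step p0 p0' -> is_program p0' ->
        exists p1', steps p1 p1' /\ is_program p1' /\ X_tri X E p0' p1') /\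
     (forall v0, step p0 v0 -> is_value v0 ->
        exists v1, steps p1 v1 /\ is_value v1 /\ X_env X (add_pair v0 v1 E))) /\
  (* (2c) symmetric conditions *)
  (forall E p0 p1, is_program p0 -> is_program p1 -> X_tri X E p0 p1 ->
     (forall p1', step p1 p1' -> is_program p1' ->
        exists p0', steps p0 p0' /\ is_program p0' /\ X_tri X E p0' p1') /\
     (forall v1, step p1 v1 -> is_value v1 ->
        exists v0, steps p0 v0 /\ is_value v0 /\ X_env X (add_pair v0 v1 E))) /\
  (* (3) *)
  (forall E, X_env X E ->
     forall b0 b1 v0 v1, E (Lam b0) (Lam b1) -> is_value v0 -> is_value v1 ->
       tilde E v0 v1 -> X_tri X E (subst0 v0 b0) (subst0 v1 b1)).

(* \approx^p : the largest environmental bisimulation for programs (union of all) *)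
Definition approx_p (E : rel) (t0 t1 : term) : Prop :=
  exists X, env_bisim_p X /\ X_tri X E t0 t1.

(* Main.v *)
Require Import Defs.
From Stdlib Require Import Arith Lia Relations Classical FunctionalExtensionality PropExtensionality.

Lemma closed_lift_id : forall t n c, closed_at n t -> n <= c -> lift c t = t.
Proof.
  induction t; simpl; intros.
  - destruct (Nat.ltb_spec n c); [reflexivity|lia].
  - f_equal. apply IHt with (S n); auto; lia.
  - destruct H. f_equal; eauto.
  - f_equal. apply IHt with (S n); auto; lia.
  - f_equal; eauto.
Qed.

Lemma closed_subst_id : forall t n j s, closed_at n t -> n <= j -> subst j s t = t.
Proof.
  induction t; simpl; intros.
  - destruct (Nat.eqb_spec n j); [lia|]. destruct (Nat.ltb_spec j n); [lia|reflexivity].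
  - f_equal. apply IHt with (S n); auto; lia.
  - destruct H. f_equal; eauto.
  - f_equal. apply IHt with (S n); auto; lia.
  - f_equal; eauto.
Qed.

Lemma closed_lift : forall t n c, closed_at n t -> closed_at (S n) (lift c t).
Proof.
  induction t; simpl; intros.
  - destruct (n <? c); simpl; lia.
  - auto.
  - destruct H; split; auto.
  - auto.
  - auto.
Qed.

Lemma closed_subst : forall t n j s, closed_at (S n) t -> closed_at n s -> j <= n ->
  closed_at n (subst j s t).
Proof.
  induction t; simpl; intros.
  - destruct (Nat.eqb_spec n j); auto.
    destruct (Nat.ltb_spec j n); simpl; lia.
  - apply IHt; auto. apply closed_lift; auto. lia.
  - destruct H; split; auto.
  - apply IHt; auto. apply closed_lift; auto. lia.
  - auto.
Qed.

Lemma plug_closed_inner : forall F t n, closed_at n (plugF F t) -> closed_at n t.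
Proof. induction F; simpl; intros; auto; try (destruct H; eauto). Qed.

Lemma plug_closed_replace : forall F t t' n, closed_at n (plugF F t) -> closed_at n t' ->
  closed_at n (plugF F t').
Proof. induction F; simpl; intros; auto; try (destruct H; split; eauto); eauto. Qed.

Lemma closed_k : forall E x n c, closed_at n (plugF E x) ->
  closed_at (S n) (plugF (liftF c E) (Var 0)).
Proof.
  induction E; simpl; intros.
  - lia.
  - destruct H; split; [apply closed_lift|eauto]; auto.
  - destruct H; split; [eauto|apply closed_lift]; auto.
  - eauto.
Qed.

Lemma step_closed : forall t t', step t t' -> closed t -> closed t'.
Proof.
  unfold closed; intros t t' Hs; destruct Hs; intros Hc.
  - apply plug_closed_replace with (1 := Hc).
    apply plug_closed_inner in Hc. simpl in Hc. destruct Hc.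
    unfold subst0. apply closed_subst; auto.
  - apply plug_closed_replace with (1 := Hc).
    apply plug_closed_inner in Hc. simpl in Hc. simpl.
    unfold subst0. apply closed_subst; auto.
    + pose proof (plug_closed_inner _ _ _ Hc). exact H1.
    + simpl. eapply closed_k; eauto.
  - apply plug_closed_replace with (1 := Hc).
    apply plug_closed_inner in Hc. exact Hc.
Qed.

Fixpoint comp (F H : fctx) : fctx :=
  match F with
  | FHole => H
  | FAppR v F' => FAppR v (comp F' H)
  | FAppL F' u => FAppL (comp F' H) u
  | FReset F' => FReset (comp F' H)
  end.

Lemma plug_comp : forall F H x, plugF (comp F H) x = plugF F (plugF H x).
Proof. induction F; simpl; intros; congruence. Qed.

Lemma comp_hole : forall F, comp F FHole = F.
Proof. induction F; simpl; congruence. Qed.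

Lemma eval_comp : forall F H, evalctx F -> evalctx H -> evalctx (comp F H).
Proof. induction F; simpl; firstorder. Qed.

Lemma eval_comp_inv : forall F H, evalctx (comp F H) -> evalctx H.
Proof. induction F; simpl; firstorder. Qed.

Lemma pure_comp_inv : forall F H, purectx (comp F H) -> purectx H.
Proof. induction F; simpl; firstorder. Qed.

Lemma pure_eval : forall F, purectx F -> evalctx F.
Proof. induction F; simpl; firstorder. Qed.

Lemma plugF_value : forall F x, is_value (plugF F x) -> F = FHole /\ is_value x.
Proof. destruct F; simpl; intros; tauto. Qed.

Lemma step_ctx : forall F a b, evalctx F -> step a b -> step (plugF F a) (plugF F b).
Proof.
  intros F a b HF Hs; destruct Hs; rewrite <- !plug_comp.
  - apply step_beta; auto. apply eval_comp; auto.
  - apply step_shift; auto. apply eval_comp; auto.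
  - apply step_reset; auto. apply eval_comp; auto.
Qed.

Lemma steps_ctx : forall F a b, evalctx F -> steps a b -> steps (plugF F a) (plugF F b).
Proof.
  intros F a b HF Hs; induction Hs.
  - apply rt_step. apply step_ctx; auto.
  - apply rt_refl.
  - eapply rt_trans; eauto.
Qed.

Lemma decomp : forall F F' a b, evalctx F -> evalctx F' -> ~ is_value a -> ~ is_value b ->
  plugF F a = plugF F' b ->
  (exists H, F' = comp F H /\ a = plugF H b) \/ (exists H, F = comp F' H /\ b = plugF H a).
Proof.
  induction F; intros F' a b HF HF' Ha Hb Heq; simpl in *.
  - left. exists F'. auto.
  - destruct F'; simpl in *.
    + right. exists (FAppR t F). auto.
    + injection Heq; intros E1 E2; subst.
      destruct (IHF F' a b) as [[H [-> ->]]|[H [-> ->]]]; try tauto;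
        [left|right]; exists H; auto.
    + injection Heq; intros E1 E2. destruct HF as [Hv _]. rewrite E2 in Hv.
      apply plugF_value in Hv. tauto.
    + discriminate.
  - destruct F'; simpl in *.
    + right. exists (FAppL F t). auto.
    + injection Heq; intros E1 E2. destruct HF' as [Hv _]. rewrite <- E2 in Hv.
      apply plugF_value in Hv. tauto.
    + injection Heq; intros E1 E2; subst.
      destruct (IHF F' a b) as [[H [-> ->]]|[H [-> ->]]]; try tauto;
        [left|right]; exists H; auto.
    + discriminate.
  - destruct F'; simpl in *; try discriminate.
    + right. exists (FReset F). auto.
    + injection Heq; intros E1.
      destruct (IHF F' a b) as [[H [-> ->]]|[H [-> ->]]]; try tauto;
        [left|right]; exists H; auto.
Qed.

Lemma L_prog : forall F q t', evalctx F -> step (plugF F (Reset q)) t' ->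
  exists p', step (Reset q) p' /\ t' = plugF F p'.
Proof.
  intros F q t' HF Hs. remember (plugF F (Reset q)) as T eqn:HT.
  destruct Hs as [F0 t v HF0 Hv | F0 E t HF0 HE | F0 v HF0 Hv].
  - destruct (decomp F F0 (Reset q) (App (Lam t) v)) as [[H [E1 E2]]|[H [E1 E2]]];
      auto; try (simpl; tauto).
    + subst F0. exists (plugF H (subst0 v t)). rewrite E2, plug_comp. split; auto.
      apply step_beta; auto. eapply eval_comp_inv; eauto.
    + destruct H; simpl in E2; try discriminate.
      * injection E2; intros E3 E4. subst v. apply plugF_value in Hv. simpl in Hv; tauto.
      * injection E2; intros E3 E4. assert (is_value (plugF H (Reset q))) by (rewrite <- E4; exact I).
        apply plugF_value in H0. simpl in H0; tauto.
  - destruct (decomp F F0 (Reset q) (Reset (plugF E (Shift t)))) as [[H [E1 E2]]|[H [E1 E2]]];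
      auto; try (simpl; tauto).
    + subst F0. eexists. rewrite E2, plug_comp. split; [|reflexivity].
      apply step_shift; auto. eapply eval_comp_inv; eauto.
    + destruct H; simpl in E2; try discriminate.
      * injection E2; intros E3. subst q. eexists. split.
        { apply (step_shift FHole); simpl; auto. }
        subst F. rewrite comp_hole. reflexivity.
      * injection E2; intros E3.
        assert (HH : evalctx H). { subst F. apply eval_comp_inv in HF. exact HF. }
        destruct (decomp E H (Shift t) (Reset q)) as [[H' [E4 E5]]|[H' [E4 E5]]];
          auto; try (simpl; tauto).
        { apply pure_eval; auto. }
        { destruct H'; simpl in E5; discriminate. }
        { subst E. apply pure_comp_inv in HE. destruct H'; simpl in *; try discriminate; tauto. }
  - destruct (decomp F F0 (Reset q) (Reset v)) as [[H [E1 E2]]|[H [E1 E2]]];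
      auto; try (simpl; tauto).
    + subst F0. eexists. rewrite E2, plug_comp. split; [|reflexivity].
      apply step_reset; auto. eapply eval_comp_inv; eauto.
    + destruct H; simpl in E2; try discriminate.
      * injection E2; intros E3. subst q. exists v. split.
        { apply (step_reset FHole); simpl; auto. }
        subst F. rewrite comp_hole. reflexivity.
      * injection E2; intros E3. rewrite E3 in Hv. apply plugF_value in Hv. simpl in Hv; tauto.
Qed.

Lemma prog_step : forall p p', is_program p -> step p p' -> is_program p' \/ is_value p'.
Proof.
  intros p p' Hp Hs; destruct Hs; destruct F; simpl in *; tauto.
Qed.

Lemma value_nostep : forall t t', is_value t -> step t t' -> False.
Proof.
  intros t t' Hv Hs; destruct Hs; apply plugF_value in Hv; simpl in Hv; tauto.
Qed.

Lemma step_reset_val : forall v y, is_value v -> step (Reset v) y -> y = v.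
Proof.
  intros v y Hv Hs. remember (Reset v) as T eqn:HT.
  destruct Hs; destruct F; simpl in HT; try discriminate.
  - injection HT; intros E1. subst v. apply plugF_value in Hv. simpl in Hv; tauto.
  - injection HT; intros E1. subst v. apply plugF_value in Hv. simpl in Hv; tauto.
  - injection HT; intros E1. subst v. apply plugF_value in Hv. simpl in Hv; tauto.
  - injection HT; intros E1. subst. reflexivity.
  - injection HT; intros E1. subst v. apply plugF_value in Hv. simpl in Hv; tauto.
Qed.

Lemma steps_reset_val : forall v w, is_value v -> steps (Reset v) w -> is_value w -> w = v.
Proof.
  intros v w Hv Hs Hw. apply clos_rt_rt1n in Hs. inversion Hs; subst.
  - simpl in Hw; tauto.
  - apply step_reset_val in H; auto. subst y. inversion H0; subst; auto.
    exfalso. eapply value_nostep; [exact Hv|eassumption].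
Qed.

Ltac tc := first [ apply to_var | apply to_lam; auto | apply to_app; auto | apply to_shift; auto | apply to_reset; auto ].

Lemma tilde_open_mono : forall (R S : rel), (forall a b, R a b -> tilde_open S a b) ->
  forall a b, tilde_open R a b -> tilde_open S a b.
Proof. intros R S HRS a b H; induction H; [apply HRS; auto|tc..]. Qed.

Lemma tilde_lift : forall G, env_ok G -> forall a b, tilde_open G a b ->
  forall c, tilde_open G (lift c a) (lift c b).
Proof.
  intros G HG a b H; induction H; intros c; simpl; try tc.
  - destruct (HG _ _ H) as (_ & H1 & _ & H2).
    rewrite (closed_lift_id t0 0 c), (closed_lift_id t1 0 c); auto; try lia.
    apply to_base; auto.
  - destruct (n <? c); tc.
Qed.

Lemma tilde_subst : forall G, env_ok G -> forall b0 b1, tilde_open G b0 b1 ->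
  forall j s0 s1, tilde_open G s0 s1 -> tilde_open G (subst j s0 b0) (subst j s1 b1).
Proof.
  intros G HG b0 b1 H; induction H; intros j s0 s1 Hs; simpl.
  - destruct (HG _ _ H) as (_ & H1 & _ & H2).
    rewrite (closed_subst_id t0 0 j s0), (closed_subst_id t1 0 j s1); auto; try lia.
    apply to_base; auto.
  - destruct (n =? j); auto. destruct (j <? n); tc.
  - apply to_lam. apply IHtilde_open. apply tilde_lift; auto.
  - tc.
  - apply to_shift. apply IHtilde_open. apply tilde_lift; auto.
  - tc.
Qed.

Lemma tilde_value : forall G, env_ok G -> forall v w, tilde_open G v w -> is_value v -> is_value w.
Proof.
  intros G HG v w H Hv; inversion H; subst; simpl in *; auto.
  apply (HG _ _ H0).
Qed.

Lemma inv_app : forall G a b t, env_ok G -> tilde_open G (App a b) t ->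
  exists a' b', t = App a' b' /\ tilde_open G a a' /\ tilde_open G b b'.
Proof.
  intros G a b t HG H; inversion H; subst.
  - destruct (HG _ _ H0) as [[] _].
  - eauto.
Qed.

Lemma inv_reset : forall G a t, env_ok G -> tilde_open G (Reset a) t ->
  exists a', t = Reset a' /\ tilde_open G a a'.
Proof.
  intros G a t HG H; inversion H; subst.
  - destruct (HG _ _ H0) as [[] _].
  - eauto.
Qed.

Lemma inv_shift : forall G a t, env_ok G -> tilde_open G (Shift a) t ->
  exists a', t = Shift a' /\ tilde_open G a a'.
Proof.
  intros G a t HG H; inversion H; subst.
  - destruct (HG _ _ H0) as [[] _].
  - eauto.
Qed.

Lemma inv_lam : forall G a t, tilde_open G (Lam a) t ->
  G (Lam a) t \/ exists a', t = Lam a' /\ tilde_open G a a'.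
Proof. intros G a t H; inversion H; subst; eauto. Qed.

Inductive crel (G : rel) : fctx -> fctx -> Prop :=
| cr_hole : crel G FHole FHole
| cr_appR v0 v1 F0 F1 : is_value v0 -> is_value v1 -> tilde_open G v0 v1 -> crel G F0 F1 ->
    crel G (FAppR v0 F0) (FAppR v1 F1)
| cr_appL F0 F1 u0 u1 : crel G F0 F1 -> tilde_open G u0 u1 -> crel G (FAppL F0 u0) (FAppL F1 u1)
| cr_reset F0 F1 : crel G F0 F1 -> crel G (FReset F0) (FReset F1).

Lemma crel_eval : forall G F0 F1, crel G F0 F1 -> evalctx F0 /\ evalctx F1.
Proof. intros G F0 F1 H; induction H; simpl; tauto. Qed.

Lemma crel_pure : forall G F0 F1, crel G F0 F1 -> purectx F0 -> purectx F1.
Proof. intros G F0 F1 H; induction H; simpl; tauto. Qed.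

Lemma crel_plug : forall G F0 F1 x y, crel G F0 F1 -> tilde_open G x y ->
  tilde_open G (plugF F0 x) (plugF F1 y).
Proof. intros G F0 F1 x y H Hxy; induction H; simpl; auto; tc. Qed.

Lemma crel_lift : forall G, env_ok G -> forall F0 F1, crel G F0 F1 ->
  forall c, crel G (liftF c F0) (liftF c F1).
Proof.
  intros G HG F0 F1 H; induction H; intros c; simpl; constructor; auto;
    try apply tilde_lift; auto.
  - destruct v0; simpl in *; tauto.
  - destruct v1; simpl in *; tauto.
Qed.

Lemma crel_comp : forall G F0 F1 H0 H1, crel G F0 F1 -> crel G H0 H1 ->
  crel G (comp F0 H0) (comp F1 H1).
Proof. intros G F0 F1 H0 H1 H HH; induction H; simpl; try constructor; auto. Qed.

Lemma crel_mono : forall (G G' : rel), (forall a b, G a b -> tilde_open G' a b) ->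
  forall F0 F1, crel G F0 F1 -> crel G' F0 F1.
Proof.
  intros G G' HG F0 F1 H; induction H; constructor; auto; eapply tilde_open_mono; eauto.
Qed.

Lemma crel_hat : forall G F0 F1 x y, crel G F0 F1 -> closed (plugF F0 x) ->
  closed (plugF F1 y) -> hat G F0 F1.
Proof.
  unfold closed; intros G F0 F1 x y H; induction H; simpl; intros Hc0 Hc1.
  - constructor.
  - destruct Hc0, Hc1. constructor; auto. repeat split; auto.
  - destruct Hc0, Hc1. constructor; auto. repeat split; auto.
  - constructor; auto.
Qed.

Lemma hat_crel : forall (R G : rel), (forall a b, R a b -> tilde_open G a b) ->
  forall F0 F1, hat R F0 F1 -> crel G F0 F1.
Proof.
  intros R G HR F0 F1 H; induction H; constructor; auto;
    match goal with H : tilde _ _ _ |- _ => destruct H as [? _] end;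
    eapply tilde_open_mono; eauto.
Qed.

Lemma hat_mono : forall (R G : rel), (forall a b, R a b -> tilde_open G a b) ->
  forall F0 F1, hat R F0 F1 -> hat G F0 F1.
Proof.
  intros R G HR F0 F1 H; induction H; constructor; auto;
    match goal with H : tilde _ _ _ |- _ => destruct H as [? [? ?]] end;
    repeat split; auto; eapply tilde_open_mono; eauto.
Qed.

Lemma hat_closed : forall R F0 F1 x y, hat R F0 F1 -> closed x -> closed y ->
  closed (plugF F0 x) /\ closed (plugF F1 y).
Proof.
  unfold closed; intros R F0 F1 x y H; induction H; simpl; intros; try tauto.
  - destruct H2 as [_ [? ?]]. destruct IHhat; auto.
  - destruct H0 as [_ [? ?]]. destruct IHhat; auto.
Qed.

Lemma crel_split : forall G F0 F1, crel G F0 F1 -> ~ purectx F0 ->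
  exists F0' F1' E0 E1, F0 = comp F0' (FReset E0) /\ F1 = comp F1' (FReset E1) /\
    crel G F0' F1' /\ crel G E0 E1 /\ purectx E0 /\ purectx E1.
Proof.
  intros G F0 F1 H; induction H; simpl; intros Hp.
  - tauto.
  - destruct IHcrel as (A & B & C & D & -> & -> & ? & ? & ? & ?). tauto.
    exists (FAppR v0 A), (FAppR v1 B), C, D; simpl; repeat split; auto; constructor; auto.
  - destruct IHcrel as (A & B & C & D & -> & -> & ? & ? & ? & ?). tauto.
    exists (FAppL A u0), (FAppL B u1), C, D; simpl; repeat split; auto; constructor; auto.
  - destruct (classic (purectx F0)).
    + exists FHole, FHole, F0, F1; simpl; repeat split; auto; try constructor; auto.
      eapply crel_pure; eauto.
    + destruct IHcrel as (A & B & C & D & -> & -> & ? & ? & ? & ?). auto.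
      exists (FReset A), (FReset B), C, D; simpl; repeat split; auto; constructor; auto.
Qed.

Lemma crel_prog : forall G F0 F1 x y, crel G F0 F1 -> is_program (plugF F0 x) ->
  F0 = FHole \/ is_program (plugF F1 y).
Proof. intros G F0 F1 x y H; destruct H; simpl; auto. Qed.

Lemma crel_hole : forall G F1, crel G FHole F1 -> F1 = FHole.
Proof. intros G F1 H; inversion H; auto. Qed.

Lemma tdec : forall G, env_ok G -> forall F0 r0 t1, evalctx F0 -> ~ is_value r0 ->
  tilde_open G (plugF F0 r0) t1 ->
  exists F1 r1, t1 = plugF F1 r1 /\ crel G F0 F1 /\ tilde_open G r0 r1.
Proof.
  intros G HG; induction F0; simpl; intros r0 t1 HF Hr H.
  - exists FHole, t1; repeat split; auto. constructor.
  - destruct HF as [Hv HF]. apply inv_app in H; auto.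
    destruct H as (a' & b' & -> & H1 & H2).
    destruct (IHF0 _ _ HF Hr H2) as (F1 & r1 & -> & ? & ?).
    exists (FAppR a' F1), r1; repeat split; auto. constructor; auto.
    eapply tilde_value; eauto.
  - apply inv_app in H; auto.
    destruct H as (a' & b' & -> & H1 & H2).
    destruct (IHF0 _ _ HF Hr H1) as (F1 & r1 & -> & ? & ?).
    exists (FAppL F1 b'), r1; repeat split; auto. constructor; auto.
  - apply inv_reset in H; auto.
    destruct H as (a' & -> & H1).
    destruct (IHF0 _ _ HF Hr H1) as (F1 & r1 & -> & ? & ?).
    exists (FReset F1), r1; repeat split; auto. constructor; auto.
Qed.

Definition flip (R : rel) : rel := fun a b => R b a.

Lemma tilde_open_flip : forall R a b, tilde_open R a b -> tilde_open (flip R) b a.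
Proof. intros R a b H; induction H; [apply to_base; auto|tc..]. Qed.

Lemma tilde_flip : forall R a b, tilde R a b -> tilde (flip R) b a.
Proof. intros R a b (H & ? & ?); repeat split; auto; apply tilde_open_flip; auto. Qed.

Lemma hat_flip : forall R F0 F1, hat R F0 F1 -> hat (flip R) F1 F0.
Proof. intros R F0 F1 H; induction H; constructor; auto; apply tilde_flip; auto. Qed.

Lemma crel_flip : forall R F0 F1, crel R F0 F1 -> crel (flip R) F1 F0.
Proof. intros R F0 F1 H; induction H; constructor; auto; apply tilde_open_flip; auto. Qed.

Lemma env_ok_flip : forall R, env_ok R -> env_ok (flip R).
Proof. unfold env_ok, flip; intros R H a b Hab; destruct (H _ _ Hab); tauto. Qed.

Lemma rel_eq : forall (R S : rel), (forall a b, R a b <-> S a b) -> R = S.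
Proof.
  intros R S H. apply functional_extensionality; intro a.
  apply functional_extensionality; intro b. apply propositional_extensionality; auto.
Qed.

Lemma flip_add : forall v0 v1 G, flip (add_pair v0 v1 G) = add_pair v1 v0 (flip G).
Proof. intros; apply rel_eq; unfold flip, add_pair; intros; tauto. Qed.

Definition sub (F G : rel) := forall a b, F a b -> tilde G a b.

Lemma sub_open : forall F G, sub F G -> forall a b, F a b -> tilde_open G a b.
Proof. intros F G H a b Hab; apply H; auto. Qed.

Lemma tilde_sub : forall F G a b, sub F G -> tilde F a b -> tilde G a b.
Proof.
  intros F G a b H (H1 & ? & ?); repeat split; auto.
  eapply tilde_open_mono; [apply sub_open; eauto|]; auto.
Qed.

Lemma sub_mono : forall F G G', sub F G -> (forall a b, G a b -> G' a b) -> sub F G'.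
Proof.
  intros F G G' H HG a b Hab. destruct (H _ _ Hab) as (? & ? & ?). repeat split; auto.
  eapply tilde_open_mono; [|eauto]. intros; apply to_base; auto.
Qed.

Definition Yenv (X : envrel) (F : rel) : Prop :=
  env_ok F /\ exists G, X_env X G /\ sub F G.

Definition Ytri (X : envrel) (F : rel) (t0 t1 : term) : Prop :=
  env_ok F /\ closed t0 /\ closed t1 /\ exists G, X_env X G /\ sub F G /\
  (tilde_open G t0 t1 \/
   (exists F0 F1 p0 p1, t0 = plugF F0 p0 /\ t1 = plugF F1 p1 /\ crel G F0 F1 /\
      is_program p0 /\ is_program p1 /\ X_tri X G p0 p1) \/
   X_tri X G t0 t1).

Definition Y (X : envrel) : envrel := {| X_env := Yenv X; X_tri := Ytri X |}.

Lemma Yenv_add : forall X F G w0 w1, env_ok F -> X_env X G -> sub F G ->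
  tilde G w0 w1 -> is_value w0 -> is_value w1 -> Yenv X (add_pair w0 w1 F).
Proof.
  intros X F G w0 w1 HF HG Hs Hw Hv0 Hv1. destruct Hw as (? & ? & ?). split.
  - intros a b [[-> ->]|Hab]; auto.
  - exists G; split; auto. intros a b [[-> ->]|Hab]; auto. repeat split; auto.
Qed.

Lemma prog_plug_nonpure : forall F x, is_program (plugF F x) -> ~ is_program x -> ~ purectx F.
Proof. destruct F; simpl; tauto. Qed.

Lemma mkY : forall X, env_bisim_p X -> forall F G F0 F1 s0 s1,
  env_ok F -> X_env X G -> sub F G -> closed (plugF F0 s0) -> closed (plugF F1 s1) ->
  crel G F0 F1 -> ~ purectx F0 -> X_tri X G s0 s1 -> Ytri X F (plugF F0 s0) (plugF F1 s1).
Proof.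
  intros X HX F G F0 F1 s0 s1 HF HG Hs Hc0 Hc1 Hcr Hp Ht.
  split; [auto|split; [auto|split; [auto|]]]. exists G; split; [auto|split; [auto|]]. right.
  destruct (classic (is_program s0 /\ is_program s1)) as [[? ?]|Hn].
  - left. exists F0, F1, s0, s1; repeat split; auto.
  - destruct (crel_split _ _ _ Hcr Hp) as (A & B & E0 & E1 & -> & -> & HAB & HE & HP0 & HP1).
    rewrite plug_comp in Hc0, Hc1 |- *. rewrite plug_comp. simpl in *.
    left. exists A, B, (Reset (plugF E0 s0)), (Reset (plugF E1 s1)); repeat split; auto.
    destruct HX as (_ & _ & H1 & _).
    apply H1; auto.
    apply crel_hat with s0 s1; auto.
    + apply plug_closed_inner in Hc0. exact Hc0.
    + apply plug_closed_inner in Hc1. exact Hc1.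
Qed.

Lemma simA : forall X, env_bisim_p X -> forall G t0 t1 t0', env_ok G -> X_env X G ->
  tilde_open G t0 t1 -> closed t0 -> closed t1 -> is_program t0 -> step t0 t0' ->
  exists t1', step t1 t1' /\ (tilde_open G t0' t1' \/
    exists F0 F1 s0 s1, t0' = plugF F0 s0 /\ t1' = plugF F1 s1 /\ crel G F0 F1 /\
      ~ purectx F0 /\ X_tri X G s0 s1).
Proof.
  intros X HX G t0 t1 t0' HG HXG Ht Hc0 Hc1 Hp Hs.
  destruct Hs as [F t v HF Hv | F E t HF HE | F v HF Hv].
  - destruct (tdec G HG F (App (Lam t) v) _ HF (fun h => h) Ht) as (F1 & r1 & -> & Hcr & Hr).
    destruct (inv_app _ _ _ _ HG Hr) as (a1 & w1 & -> & Ha & Hw).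
    assert (Hw1 : is_value w1) by (eapply tilde_value; eauto).
    destruct (crel_eval _ _ _ Hcr) as [_ HF1].
    destruct (inv_lam _ _ _ Ha) as [Hb|(b1 & -> & Hb)].
    + destruct (HG _ _ Hb) as (_ & _ & Hva & _). destruct a1 as [| b1 | | |]; simpl in Hva; try tauto.
      exists (plugF F1 (subst0 w1 b1)). split; [apply step_beta; auto|].
      right. exists F, F1, (subst0 v t), (subst0 w1 b1).
      split; [reflexivity|split; [reflexivity|split; [auto|split]]].
      { eapply prog_plug_nonpure; [exact Hp|simpl; tauto]. }
      destruct HX as (_ & _ & _ & _ & _ & H3).
      apply H3; auto. split; [auto|split].
      * apply plug_closed_inner in Hc0. apply Hc0.
      * apply plug_closed_inner in Hc1. apply Hc1.
    + exists (plugF F1 (subst0 w1 b1)). split; [apply step_beta; auto|].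
      left. apply crel_plug; auto. apply tilde_subst; auto.
  - destruct (tdec G HG F (Reset (plugF E (Shift t))) _ HF (fun h => h) Ht) as (F1 & r1 & -> & Hcr & Hr).
    destruct (inv_reset _ _ _ HG Hr) as (x1 & -> & Hx).
    destruct (tdec G HG E (Shift t) _ (pure_eval _ HE) (fun h => h) Hx) as (E1 & y1 & -> & HcrE & Hy).
    destruct (inv_shift _ _ _ HG Hy) as (b1 & -> & Hb).
    destruct (crel_eval _ _ _ Hcr) as [_ HF1].
    eexists. split; [apply step_shift; auto; eapply crel_pure; eauto|].
    left. apply crel_plug; auto. apply to_reset. apply tilde_subst; auto.
    apply to_lam. apply to_reset. apply crel_plug; [|apply to_var].
    apply crel_lift; auto.
  - destruct (tdec G HG F (Reset v) _ HF (fun h => h) Ht) as (F1 & r1 & -> & Hcr & Hr).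
    destruct (inv_reset _ _ _ HG Hr) as (v1 & -> & Hvv).
    destruct (crel_eval _ _ _ Hcr) as [_ HF1].
    exists (plugF F1 v1). split; [apply step_reset; auto; eapply tilde_value; eauto|].
    left. apply crel_plug; auto.
Qed.

Lemma Y_fwd0 : forall X, env_bisim_p X -> forall F p0 p1, is_program p0 -> is_program p1 ->
  Ytri X F p0 p1 -> forall t0', step p0 t0' ->
  exists t1', steps p1 t1' /\ (is_program t0' -> is_program t1' /\ Ytri X F t0' t1') /\
    (is_value t0' -> is_value t1' /\ Yenv X (add_pair t0' t1' F)).
Proof.
  intros X HX F p0 p1 Hp0 Hp1 HY t0' Hs.
  pose proof HX as (Hwe & Hwt & H1 & H2 & H2c & H3).
  destruct HY as (HF & Hc0 & Hc1 & G & HXG & HsG & Hcase).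
  pose proof (Hwe _ HXG) as HG.
  pose proof (step_closed _ _ Hs Hc0) as Hc0'.
  destruct Hcase as [Ha | [Hb | Hc]].
  - destruct (simA X HX G p0 p1 t0' HG HXG Ha Hc0 Hc1 Hp0 Hs) as (t1' & Hs1 & [Hr | Hr]).
    + pose proof (step_closed _ _ Hs1 Hc1) as Hc1'.
      exists t1'. split; [apply rt_step; auto|]. split.
      * intros Hp0'. destruct t0'; simpl in Hp0'; try tauto.
        destruct (inv_reset _ _ _ HG Hr) as (x & -> & _). split; [exact I|].
        split; [auto|split; [auto|split; [auto|]]]. exists G; split; [auto|split; [auto|]]. left; auto.
      * intros Hv0. assert (Hv1 : is_value t1') by (eapply tilde_value; eauto).
        split; auto. eapply Yenv_add; eauto. repeat split; auto.
    + destruct Hr as (F0 & F1 & s0 & s1 & -> & -> & Hcr & Hnp & Hx).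
      pose proof (step_closed _ _ Hs1 Hc1) as Hc1'.
      exists (plugF F1 s1). split; [apply rt_step; auto|]. split.
      * intros Hp0'. split.
        { destruct (crel_prog _ _ _ s0 s1 Hcr Hp0') as [->|?]; auto. simpl in Hnp; tauto. }
        apply mkY with G; auto.
      * intros Hv. apply plugF_value in Hv. destruct Hv as [-> _]. simpl in Hnp; tauto.
  - destruct Hb as (F0 & F1 & q0 & q1 & -> & -> & Hcr & Hq0 & Hq1 & Hx).
    destruct (crel_eval _ _ _ Hcr) as [HF0 HF1].
    destruct q0 as [| | | | q]; simpl in Hq0; try tauto.
    clear Hq0. assert (Hq0 : is_program (Reset q)) by exact I.
    destruct (L_prog _ _ _ HF0 Hs) as (q0' & Hsq & ->).
    destruct (H2 _ _ _ Hq0 Hq1 Hx) as [H2a H2b].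
    destruct (prog_step _ _ Hq0 Hsq) as [Hpq | Hvq].
    + destruct (H2a _ Hsq Hpq) as (q1' & Hss & Hpq1 & Hx').
      destruct (Hwt _ _ _ Hx') as (_ & Hcq0 & Hcq1).
      exists (plugF F1 q1'). split; [apply steps_ctx; auto|]. split.
      * intros Hp'. split.
        { destruct (crel_prog _ _ _ q0' q1' Hcr Hp') as [->|?]; auto.
          apply crel_hole in Hcr; subst; simpl; auto. }
        split; [auto|split; [eapply plug_closed_replace; eauto|split; [eapply plug_closed_replace; eauto|]]].
        exists G; split; [auto|split; [auto|]]. right; left.
        exists F0, F1, q0', q1'; repeat split; auto.
      * intros Hv. apply plugF_value in Hv. destruct Hv as [_ Hv].
        destruct q0'; simpl in *; tauto.
    + destruct (H2b _ Hsq Hvq) as (w1 & Hss & Hvw & Henv).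
      pose proof (Hwe _ Henv) as HG'.
      destruct (HG' q0' w1 (or_introl (conj eq_refl eq_refl))) as (_ & Hcw0 & _ & Hcw1).
      assert (HGG' : forall a b, G a b -> add_pair q0' w1 G a b) by (intros; right; auto).
      assert (Hsub' : sub F (add_pair q0' w1 G)) by (eapply sub_mono; eauto).
      exists (plugF F1 w1). split; [apply steps_ctx; auto|]. split.
      * intros Hp'. split.
        { destruct (crel_prog _ _ _ q0' w1 Hcr Hp') as [->|?]; auto.
          simpl in Hp'. destruct q0'; simpl in *; tauto. }
        split; [auto|split; [eapply plug_closed_replace; eauto|split; [eapply plug_closed_replace; eauto|]]].
        exists (add_pair q0' w1 G); split; [auto|split; [auto|]]. left.
        apply crel_plug.
        { eapply crel_mono; [|eauto]. intros; apply to_base; auto. }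
        apply to_base. left; auto.
      * intros Hv. pose proof (plugF_value _ _ Hv) as [-> _].
        apply crel_hole in Hcr; subst. simpl in *. split; auto.
        eapply Yenv_add; eauto. repeat split; auto. apply to_base; left; auto.
  - destruct (H2 _ _ _ Hp0 Hp1 Hc) as [H2a H2b].
    destruct (prog_step _ _ Hp0 Hs) as [Hpq | Hvq].
    + destruct (H2a _ Hs Hpq) as (q1' & Hss & Hpq1 & Hx').
      destruct (Hwt _ _ _ Hx') as (_ & Hcq0 & Hcq1).
      exists q1'. split; auto. split.
      * intros _. split; auto.
        split; [auto|split; [auto|split; [auto|]]].
        exists G; split; [auto|split; [auto|]]. right; right; auto.
      * intros Hv. destruct t0'; simpl in *; tauto.
    + destruct (H2b _ Hs Hvq) as (w1 & Hss & Hvw & Henv).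
      pose proof (Hwe _ Henv) as HG'.
      destruct (HG' t0' w1 (or_introl (conj eq_refl eq_refl))) as (_ & Hcw0 & _ & Hcw1).
      assert (Hsub' : sub F (add_pair t0' w1 G)) by (eapply sub_mono; eauto; intros; right; auto).
      exists w1. split; auto. split.
      * intros Hp'. destruct t0'; simpl in *; tauto.
      * intros _. split; auto. eapply Yenv_add; eauto. repeat split; auto. apply to_base; left; auto.
Qed.

Definition flipX (X : envrel) : envrel :=
  {| X_env := fun G => X_env X (flip G); X_tri := fun G a b => X_tri X (flip G) b a |}.

Lemma flip_bisim : forall X, env_bisim_p X -> env_bisim_p (flipX X).
Proof.
  intros X (Hwe & Hwt & H1 & H2 & H2c & H3).
  split; [|split; [|split; [|split; [|split]]]]; simpl.
  - intros E HE. exact (env_ok_flip _ (Hwe _ HE)).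
  - intros E t0 t1 H. destruct (Hwt _ _ _ H) as (? & ? & ?). split; [|tauto].
    exact (env_ok_flip _ H0).
  - intros E t0 t1 H Hn E0 E1 HE0 HE1 Hh. apply H1; auto.
    + tauto.
    + apply hat_flip; auto.
  - intros E p0 p1 Hp0 Hp1 H. destruct (H2c _ _ _ Hp1 Hp0 H) as [Ha Hb]. split.
    + intros p0' Hs Hp. destruct (Ha _ Hs Hp) as (p1' & ? & ? & ?). eauto.
    + intros v0 Hs Hv. destruct (Hb _ Hs Hv) as (v1 & ? & ? & ?). exists v1; repeat split; auto.
      rewrite flip_add. auto.
  - intros E p0 p1 Hp0 Hp1 H. destruct (H2 _ _ _ Hp1 Hp0 H) as [Ha Hb]. split.
    + intros p1' Hs Hp. destruct (Ha _ Hs Hp) as (p0' & ? & ? & ?). eauto.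
    + intros v1 Hs Hv. destruct (Hb _ Hs Hv) as (v0 & ? & ? & ?). exists v0; repeat split; auto.
      rewrite flip_add. auto.
  - intros E HE b0 b1 v0 v1 Hb Hv0 Hv1 Ht. apply H3; auto. apply tilde_flip; auto.
Qed.

Lemma Y_flip : forall X F a b, Ytri X F a b -> Ytri (flipX X) (flip F) b a.
Proof.
  intros X F a b (HF & Hc0 & Hc1 & G & HXG & Hs & Hcase).
  split; [apply env_ok_flip; auto|split; [auto|split; [auto|]]].
  exists (flip G). split; [exact HXG|split].
  - intros x y Hxy. apply tilde_flip. apply Hs. exact Hxy.
  - destruct Hcase as [Ha|[Hb|Hc]].
    + left. apply tilde_open_flip; auto.
    + right; left. destruct Hb as (F0 & F1 & p0 & p1 & -> & -> & Hcr & ? & ? & ?).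
      exists F1, F0, p1, p0; repeat split; auto. apply crel_flip; auto.
    + right; right. exact Hc.
Qed.

Lemma Yenv_flip : forall X H, Yenv (flipX X) H -> Yenv X (flip H).
Proof.
  intros X H (HH & G & HXG & Hs). split; [apply env_ok_flip; auto|].
  exists (flip G). split; [exact HXG|].
  intros x y Hxy. apply tilde_flip. apply Hs. exact Hxy.
Qed.

Lemma Yenv_ext : forall X H H', (forall a b, H a b <-> H' a b) -> Yenv X H -> Yenv X H'.
Proof.
  intros X H H' Heq (HH & G & HXG & Hs). split.
  - intros a b Hab. apply HH. apply Heq; auto.
  - exists G. split; auto. intros a b Hab. apply Hs. apply Heq; auto.
Qed.

Lemma Y_fwd : forall X, env_bisim_p X -> forall F p0 p1, is_program p0 -> is_program p1 ->
  Ytri X F p0 p1 ->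
  (forall p0', step p0 p0' -> is_program p0' ->
     exists p1', steps p1 p1' /\ is_program p1' /\ Ytri X F p0' p1') /\
  (forall v0, step p0 v0 -> is_value v0 ->
     exists v1, steps p1 v1 /\ is_value v1 /\ Yenv X (add_pair v0 v1 F)).
Proof.
  intros X HX F p0 p1 Hp0 Hp1 HY. split.
  - intros p0' Hs Hp. destruct (Y_fwd0 X HX F p0 p1 Hp0 Hp1 HY p0' Hs) as (t1' & ? & Ha & _).
    destruct (Ha Hp). eauto.
  - intros v0 Hs Hv. destruct (Y_fwd0 X HX F p0 p1 Hp0 Hp1 HY v0 Hs) as (t1' & ? & _ & Hb).
    destruct (Hb Hv). eauto.
Qed.

Lemma Y_bisim : forall X, env_bisim_p X -> env_bisim_p (Y X).
Proof.
  intros X HX. pose proof HX as (Hwe & Hwt & H1 & H2 & H2c & H3).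
  split; [|split; [|split; [|split; [|split]]]]; simpl.
  - intros E HE; apply HE.
  - intros E t0 t1 (? & ? & ? & _); auto.
  - intros F t0 t1 HY Hn E0 E1 HE0 HE1 Hh.
    destruct HY as (HF & Hc0 & Hc1 & G & HXG & Hs & Hcase).
    pose proof (Hwe _ HXG) as HG.
    destruct (hat_closed _ _ _ _ _ Hh Hc0 Hc1) as [Hd0 Hd1].
    assert (HFG : forall a b, F a b -> tilde_open G a b) by (apply sub_open; auto).
    split; [auto|split; [exact Hd0|split; [exact Hd1|]]].
    exists G; split; [auto|split; [auto|]].
    destruct Hcase as [Ha|[Hb|Hc]].
    + left. apply to_reset. apply crel_plug; auto. eapply hat_crel; eauto.
    + right; left. destruct Hb as (F0 & F1 & p0 & p1 & -> & -> & Hcr & ? & ? & ?).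
      exists (FReset (comp E0 F0)), (FReset (comp E1 F1)), p0, p1.
      simpl. rewrite !plug_comp. repeat split; auto.
      apply cr_reset. apply crel_comp; auto. eapply hat_crel; eauto.
    + right; right. apply H1; auto. eapply hat_mono; eauto.
  - intros F p0 p1 Hp0 Hp1 HY. apply Y_fwd; auto.
  - intros F p0 p1 Hp0 Hp1 HY.
    pose proof (Y_flip X F p0 p1 HY) as HY'.
    destruct (Y_fwd (flipX X) (flip_bisim X HX) (flip F) p1 p0 Hp1 Hp0 HY') as [Ha Hb].
    split.
    + intros p1' Hs Hp. destruct (Ha p1' Hs Hp) as (p0' & Hss & Hp' & HY2).
      exists p0'. split; auto. split; auto.
      exact (Y_flip (flipX X) (flip F) p1' p0' HY2).
    + intros v1 Hs Hv. destruct (Hb v1 Hs Hv) as (v0 & Hss & Hv' & HE).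
      exists v0. split; auto. split; auto.
      apply Yenv_flip in HE. eapply Yenv_ext; [|exact HE].
      unfold flip, add_pair; intros; tauto.
  - intros F (HF & G & HXG & Hs) b0 b1 v0 v1 Hb Hv0 Hv1 Ht.
    pose proof (Hwe _ HXG) as HG.
    destruct (Hs _ _ Hb) as (Hbb & Hcb0 & Hcb1).
    pose proof (tilde_sub _ _ _ _ Hs Ht) as HtG.
    destruct HtG as (Hvv & Hcv0 & Hcv1).
    destruct (inv_lam _ _ _ Hbb) as [Hg|(b1' & Heq & Hb')].
    + pose proof (H3 _ HXG _ _ _ _ Hg Hv0 Hv1 (conj Hvv (conj Hcv0 Hcv1))) as Hx.
      destruct (Hwt _ _ _ Hx) as (_ & ? & ?).
      split; [auto|split; [auto|split; [auto|]]].
      exists G; split; [auto|split; [auto|]]. right; right; auto.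
    + injection Heq; intros ->.
      unfold closed in *; simpl in Hcb0, Hcb1.
      split; [auto|split; [apply closed_subst; auto|split; [apply closed_subst; auto|]]].
      exists G; split; [auto|split; [auto|]]. left. apply tilde_subst; auto.
Qed.

Theorem lemma13 (E : rel) (v0 v1 : term) :
  env_ok E ->
  is_value v0 -> closed v0 -> is_value v1 -> closed v1 ->
  approx_p E v0 v1 ->
  forall C : ctx, closed (plugC C v0) -> closed (plugC C v1) ->
    approx_p E (plugC C v0) (plugC C v1).
Proof.
  intros HE Hv0 Hc0 Hv1 Hc1 [X0 [HX0 Htri]] C HC0 HC1.
  assert (HW : X_env X0 (add_pair v0 v1 E)).
  { pose proof HX0 as (_ & _ & H1 & H2 & _).
    assert (Hr : X_tri X0 E (Reset v0) (Reset v1)).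
    { apply (H1 E v0 v1 Htri) with (E0 := FHole) (E1 := FHole); simpl; auto.
      - destruct v0; simpl in *; tauto.
      - constructor. }
    destruct (H2 E (Reset v0) (Reset v1) I I Hr) as [_ Hb].
    destruct (Hb v0 (step_reset FHole v0 I Hv0) Hv0) as (w & Hs & Hw & Henv).
    rewrite (steps_reset_val v1 w Hv1 Hs Hw) in Henv. exact Henv. }
  exists (Y X0). split; [apply Y_bisim; auto|].
  simpl. split; [auto|split; [auto|split; [auto|]]].
  exists (add_pair v0 v1 E). split; [auto|split].
  - intros a b Hab. destruct (HE _ _ Hab) as (_ & ? & _ & ?).
    repeat split; auto. apply to_base. right; auto.
  - left. clear HC0 HC1. induction C; simpl.
    + apply to_base. left; auto.
    + apply to_lam; auto.
    + apply to_app; auto. clear IHC. induction t; try tc; auto.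
    + apply to_app; auto. clear IHC. induction t; try tc; auto.
    + apply to_shift; auto.
    + apply to_reset; auto.
Qed.
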